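(* For every $\epsilon>0$ there is $\delta>0$ (depending only on $\epsilon$) such that the algorithm ParHAC run with parameter $\delta$ is a $(1+\epsilon)$-approximate average-linkage HAC algorithm: every merge it performs is of an edge whose current average-linkage weight is at least $W_{\max}/(1+\epsilon)$, where $W_{\max}$ is the maximum edge weight in the cluster graph at the time of that merge.
   Context: Setting: an undirected graph $G=(V,E,w)$ with positive edge weights. A partition of $V$ into clusters is maintained (initially singletons), together with the cluster graph $H$ whose vertices are the clusters, with an edge between clusters $X\neq Y$ iff $G$ has an edge between them, of average-linkage weight $\mathcal{W}(X,Y)=\sum_{(x,y)\in E,\,x\in X,\,y\in Y} w(x,y)/(|X||Y|)$. Merging two clusters means replacing them by their union; the size $|X|$ of a vertex of $H$ is the size of its cluster. Algorithm ParHAC$(G,\delta)$: while $H$ has edges, let $W_{\max}$ be the current maximum edge weight of $H$ and run ContractLayer with threshold $T_L=W_{\max}/(1+\delta)$. ContractLayer (one ''layer-contraction phase''): while the maximum edge weight of $H$ is at least $T_L$, perform an outer round: color each non-isolated vertex of $H$ red or blue independently with probability $1/2$ each; let $G_c$ consist of the edges of $H$ of weight $\ge T_L$ joining a blue vertex $x$ to a red vertex $y$ with $|y|\ge|x|$. While $G_c$ has edges, perform an inner round: each blue vertex $b$ picks an independent uniform priority $\pi_b\in[0,1]$ and a uniformly random red neighbor $C_b$ in $G_c$ (blue vertices with no red neighbor in $G_c$ do nothing); for each red $r$, order the blue vertices proposing to $r$ by priority and select the shortest prefix whose total cluster size exceeds $\delta|r|$ (all of them if no prefix does); merge every selected blue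 vertex into its red vertex (in the sorted order), updating all edge weights of $H$ and $G_c$ exactly; then remove from $G_c$ every edge with two red endpoints or weight below $T_L$, and remove from $G_c$ every red vertex whose cluster size has grown by more than a factor $(1+\delta)$ since the start of the outer round. An algorithm is $(1+\epsilon)$-approximate if every merge is of an edge with weight at least $1/(1+\epsilon)$ times the maximum edge weight of $H$ at that moment. *)

(* Defs.v *)
From HB Require Import structures.
From mathcomp Require Import all_boot all_order all_algebra.
Set Implicit Arguments. Unset Strict Implicit. Unset Printing Implicit Defensive.
Import Order.TTheory GRing.Theory Num.Theory.
Local Open Scope ring_scope.

Section ParHAC.
Variables (R : realFieldType) (V : finType) (e : rel V) (w : V -> V -> R).
Variable delta : R.

(* A clustering: cluster ids are vertices of V; [c i] is the (possibly
   empty) cluster with id i.  Initially [c i = [set i]].  Merging blue b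
   into red r puts [c b] into [c r] and kills id b. *)
Definition clustering := {ffun V -> {set V}}.

Definition init_clustering : clustering := [ffun i => [set i]].

Definition linked (X Y : {set V}) : bool := [exists x in X, exists y in Y, e x y].

Definition avgW (X Y : {set V}) : R :=
  (\sum_(x in X) \sum_(y in Y | e x y) w x y) / (#|X| * #|Y|)%:R.

Definition alive (c : clustering) (i : V) : bool := c i != set0.

Definition Hedge (c : clustering) (i j : V) : bool :=
  [&& i != j, alive c i, alive c j & linked (c i) (c j)].

Definition Hw (c : clustering) (i j : V) : R := avgW (c i) (c j).

Definition has_edges (c : clustering) : bool := [exists p : V * V, Hedge c p.1 p.2].

(* maximum edge weight of H (0 if H has no edges) *)
Definition Wmax (c : clustering) : R :=
  \big[Num.max/0]_(p : V * V | Hedge c p.1 p.2) Hw c p.1 p.2.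

Definition nonisolated (c : clustering) (i : V) : bool := [exists j, Hedge c i j].

Definition csize (c : clustering) (i : V) : R := (#|c i|)%:R.

Definition merge (c : clustering) (b r : V) : clustering :=
  [ffun i => if i == r then c r :|: c b else if i == b then set0 else c i].

(* G_c at the start of an outer round: pairs (blue x, red y) *)
Definition initGc (c : clustering) (T : R) (blue : {set V}) : {set V * V} :=
  [set p | [&& Hedge c p.1 p.2, p.1 \in blue, p.2 \notin blue,
              T <= Hw c p.1 p.2 & (#|c p.1| <= #|c p.2|)%N ]].

Definition has_red_nbr (Gc : {set V * V}) (b : V) : bool := [exists r, (b, r) \in Gc].

Definition proposers (Gc : {set V * V}) (blue : {set V}) (C : V -> V) (r : V) :=
  [seq b <- enum blue | has_red_nbr Gc b && (C b == r)].

(* sort the proposers by priority and take the shortest prefix whose total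
   cluster size exceeds delta*|r| (all of them if there is none) *)
Definition select (c : clustering) (pi : V -> R) (s : seq V) (r : V) : seq V :=
  let s' := sort (fun a b => pi a <= pi b) s in
  take (find (fun k => delta * csize c r < \sum_(b <- take k s') csize c b)
             (iota 0 (size s').+1)) s'.

Definition selected c Gc blue C pi r : seq (V * V) :=
  [seq (b, r) | b <- select c pi (proposers Gc blue C r) r].

(* the merges of an inner round, performed sequentially: every red vertex
   absorbs its selected blue vertices in sorted order; merges into
   different red vertices may be interleaved arbitrarily *)
Definition valid_pending c Gc blue C pi (pend : seq (V * V)) : Prop :=
  perm_eq pend (flatten [seq selected c Gc blue C pi r | r <- enum V]) /\
  forall r, [seq p <- pend | p.2 == r] = selected c Gc blue C pi r.

(* G_c after an inner round: drop edges whose blue endpoint was merged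
   (they became red-red), edges of weight below T, and edges at red
   vertices that grew by more than a factor (1+delta) *)
Definition cleanGc (c : clustering) (T : R) (Gc : {set V * V}) (sz0 : {ffun V -> nat})
  : {set V * V} :=
  [set p in Gc | [&& alive c p.1, T <= Hw c p.1 p.2 &
                    csize c p.2 <= (1 + delta) * (sz0 p.2)%:R]].

Inductive phase :=
| Idle
| Layer of R
| Outer of R & {set V} & {set V * V} & {ffun V -> nat}
| Merging of R & {set V} & {set V * V} & {ffun V -> nat} & seq (V * V).

Definition state := (clustering * phase)%type.

(* one step of ParHAC(G, delta); the random choices (colouring, priorities,
   proposals) are arbitrary outcomes; a step labelled [Some (b,r)] merges
   cluster b into cluster r *)
Inductive step : state -> option (V * V) -> state -> Prop :=
| StepLayerStart c :
    has_edges c -> step (c, Idle) None (c, Layer (Wmax c / (1 + delta)))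
| StepLayerEnd c T :
    Wmax c < T -> step (c, Layer T) None (c, Idle)
| StepOuterStart c T (blue : {set V}) :
    T <= Wmax c -> (forall b, b \in blue -> nonisolated c b) ->
    step (c, Layer T) None
         (c, Outer T blue (initGc c T blue) [ffun i => #|c i|])
| StepOuterEnd c T blue Gc sz0 :
    Gc = set0 -> step (c, Outer T blue Gc sz0) None (c, Layer T)
| StepInner c T (blue : {set V}) Gc sz0 (C : V -> V) (pi : V -> R) pend :
    Gc != set0 ->
    (forall b, b \in blue -> has_red_nbr Gc b -> (b, C b) \in Gc) ->
    (forall b, 0 <= pi b <= 1) ->
    {in blue &, injective pi} ->
    valid_pending c Gc blue C pi pend ->
    step (c, Outer T blue Gc sz0) None (c, Merging T blue Gc sz0 pend)
| StepMerge c T blue Gc sz0 b r pend :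
    step (c, Merging T blue Gc sz0 ((b, r) :: pend)) (Some (b, r))
         (merge c b r, Merging T blue Gc sz0 pend)
| StepInnerEnd c T blue Gc sz0 :
    step (c, Merging T blue Gc sz0 [::]) None
         (c, Outer T blue (cleanGc c T Gc sz0) sz0).

Inductive reachable : state -> Prop :=
| ReachInit : reachable (init_clustering, Idle)
| ReachStep s m s' : reachable s -> step s m s' -> reachable s'.

Definition approx_merges (eps : R) : Prop :=
  forall s b r s', reachable s -> step s (Some (b, r)) s' ->
    Hedge s.1 b r /\ Wmax s.1 / (1 + eps) <= Hw s.1 b r.

End ParHAC.

(* Main.v *)
Require Import Defs.
From HB Require Import structures.
From mathcomp Require Import all_boot all_order all_algebra.
From mathcomp Require Import ring lra zify.
Set Implicit Arguments. Unset Strict Implicit. Unset Printing Implicit Defensive.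
Import Order.TTheory GRing.Theory Num.Theory.
Local Open Scope ring_scope.

Section Main.
Variables (R : realFieldType) (V : finType) (e : rel V) (w : V -> V -> R).
Hypothesis esym : symmetric e.
Hypothesis wsym : forall x y, w x y = w y x.
Hypothesis wpos : forall x y, e x y -> 0 < w x y.

Definition S (X Y : {set V}) : R := \sum_(x in X) \sum_(y in Y | e x y) w x y.

Lemma S_ge0 (X Y : {set V}) : 0 <= S X Y.
Proof. apply: sumr_ge0 => x _; apply: sumr_ge0 => y /andP[_ h]; exact: ltW (wpos h). Qed.

Lemma S_sym (X Y : {set V}) : S X Y = S Y X.
Proof.
rewrite /S; under eq_bigr do rewrite big_mkcondr.
rewrite exchange_big /=; apply: eq_bigr => y _; rewrite big_mkcondr.
by apply: eq_bigr => x _; rewrite esym wsym.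
Qed.

Lemma S_U (X Y Z : {set V}) : [disjoint X & Y] -> S (X :|: Y) Z = S X Z + S Y Z.
Proof.
move=> d; rewrite /S -bigU //=; apply: eq_bigl => x; by rewrite !inE.
Qed.

Lemma S_monoR (X Y Y' : {set V}) : Y \subset Y' -> S X Y <= S X Y'.
Proof.
move=> sub; apply: ler_sum => x _.
rewrite [X in _ <= X](big_setIDcond _ _ Y) /=.
have -> : Y' :&: Y = Y by apply/setIidPr.
rewrite lerDl; apply: sumr_ge0 => y /andP[_ h]; exact: ltW (wpos h).
Qed.

Lemma S_unlinked (X Y : {set V}) : ~~ linked e X Y -> S X Y = 0.
Proof.
move=> nl; apply: big1 => x xX; apply: big1 => y /andP[yY exy].
by case/negP: nl; apply/existsP; exists x; rewrite xX; apply/existsP; exists y; rewrite yY.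
Qed.

Lemma S0l (Y : {set V}) : S set0 Y = 0.
Proof. by rewrite /S big_set0. Qed.
Lemma S0r (X : {set V}) : S X set0 = 0.
Proof. by rewrite S_sym S0l. Qed.

Lemma linked_mono (X X' Y Y' : {set V}) : X \subset X' -> Y \subset Y' -> linked e X Y -> linked e X' Y'.
Proof.
move=> sX sY /existsP[x /andP[xX /existsP[y /andP[yY exy]]]].
apply/existsP; exists x; rewrite (subsetP sX _ xX); apply/existsP; exists y.
by rewrite (subsetP sY _ yY).
Qed.


Lemma Hw_S (c : clustering V) i j :
  Hw e w c i j = S (c i) (c j) / (#|c i|%:R * #|c j|%:R).
Proof. by rewrite /Hw /avgW natrM. Qed.

Lemma Hw_ge0 (c : clustering V) i j : 0 <= Hw e w c i j.
Proof. by rewrite Hw_S divr_ge0 ?S_ge0 // mulr_ge0. Qed.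

Lemma Wmax_ge0 (c : clustering V) : 0 <= Wmax e w c.
Proof.
rewrite /Wmax; elim/big_ind: _ => //.
- by move=> x y hx hy; rewrite le_max hx.
- by move=> p _; exact: Hw_ge0.
Qed.

Lemma div_le (a d M : R) : 0 <= d -> 0 <= M -> a <= M * d -> a / d <= M.
Proof.
move=> d0 M0 h; case: (eqVneq d 0) => [->|dn0]; first by rewrite invr0 mulr0.
by rewrite ler_pdivrMr // lt0r dn0.
Qed.

Lemma S_le_Wmax (c : clustering V) i j : i != j ->
  S (c i) (c j) <= Wmax e w c * (#|c i|%:R * #|c j|%:R).
Proof.
move=> ij; case H: (Hedge e c i j).
- have := le_bigmax_cond (0:R) (j := (i, j)) (P := fun p => Hedge e c p.1 p.2)
    (fun p => Hw e w c p.1 p.2) H.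
  rewrite -/(Wmax e w c) /= Hw_S.
  move: H; rewrite /Hedge /alive => /and4P[_ ai aj _].
  have dpos : 0 < (#|c i|%:R * #|c j|%:R : R).
    by rewrite mulr_gt0 // ltr0n card_gt0.
  by rewrite ler_pdivrMr.
- have -> : S (c i) (c j) = 0.
    move: H; rewrite /Hedge ij /alive /=.
    case: (eqVneq (c i) set0) => [->|_]; first by rewrite S0l.
    case: (eqVneq (c j) set0) => [->|_]; first by rewrite S0r.
    by move=> /= /negbT /S_unlinked.
  by rewrite mulr_ge0 ?Wmax_ge0 // mulr_ge0.
Qed.

Definition disj (c : clustering V) := forall i j, i != j -> [disjoint c i & c j].

Lemma disj_init : disj (init_clustering V).
Proof.
move=> i j ij; rewrite !ffunE -setI_eq0; apply/eqP/setP => x.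
by rewrite !inE; apply/negbTE; apply/andP => -[/eqP -> /eqP]; apply/eqP.
Qed.

Lemma merge_same (c : clustering V) r : Defs.merge c r r = c.
Proof. by apply/ffunP => k; rewrite ffunE; case: eqP => [->|//]; rewrite setUid. Qed.

Lemma disj_merge (c : clustering V) b r : disj c -> disj (Defs.merge c b r).
Proof.
move=> D; case: (eqVneq b r) => [->|br]; first by rewrite merge_same.
move=> i j ij; rewrite !ffunE.
have d0 (A : {set V}) : [disjoint A & set0] by rewrite -setI_eq0 setI0.
have d0' (A : {set V}) : [disjoint set0 & A] by rewrite -setI_eq0 set0I.
case: (eqVneq i r) => [ei|ir]; case: (eqVneq j r) => [ej|jr].
- by rewrite ei ej eqxx in ij.
- subst i; case: (eqVneq j b) => [//|jb].
  rewrite -setI_eq0 setIUl (disjoint_setI0 (D _ _ ij)).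
  by rewrite (disjoint_setI0 (D b j _)) ?setU0 // eq_sym.
- subst j; case: (eqVneq i b) => [//|ib].
  rewrite -setI_eq0 setIUr (disjoint_setI0 (D _ _ ij)).
  by rewrite (disjoint_setI0 (D i b _)) ?setU0.
- case: (eqVneq i b) => [//|ib]; case: (eqVneq j b) => [//|jb].
  exact: D.
Qed.

Lemma S_merge_bound (c : clustering V) b r i j : disj c -> b != r -> i != j ->
  S (Defs.merge c b r i) (Defs.merge c b r j) <=
  Wmax e w c * (#|Defs.merge c b r i|%:R * #|Defs.merge c b r j|%:R).
Proof.
move=> D br ij; set M := Wmax e w c.
have M0 : 0 <= M := Wmax_ge0 c.
have cardU : #|c r :|: c b| = (#|c r| + #|c b|)%N.
  by rewrite cardsU (disjoint_setI0 (D _ _ _)) ?cards0 ?subn0 // eq_sym.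
have key k : k != r -> k != b ->
  S (c r :|: c b) (c k) <= M * (#|c r :|: c b|%:R * #|c k|%:R).
  move=> kr kb; rewrite S_U ?D 1?eq_sym // cardU natrD mulrDl mulrDr.
  by apply: lerD; apply: S_le_Wmax; rewrite eq_sym.
rewrite !ffunE.
case: (eqVneq i r) => [ei|ir]; case: (eqVneq j r) => [ej|jr].
- by rewrite ei ej eqxx in ij.
- case: (eqVneq j b) => [_|jb]; first by rewrite S0r cards0 mulr0 mulr0.
  exact: key.
- case: (eqVneq i b) => [_|ib]; first by rewrite S0l cards0 mul0r mulr0.
  by rewrite S_sym (mulrC #|c i|%:R); apply: key.
- case: (eqVneq i b) => [_|ib]; first by rewrite S0l cards0 mul0r mulr0.
  case: (eqVneq j b) => [_|jb]; first by rewrite S0r cards0 mulr0 mulr0.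
  exact: S_le_Wmax.
Qed.

Lemma Wmax_merge (c : clustering V) b r : disj c ->
  Wmax e w (Defs.merge c b r) <= Wmax e w c.
Proof.
move=> D; case: (eqVneq b r) => [->|br]; first by rewrite merge_same.
apply: bigmax_le; first exact: Wmax_ge0.
move=> [i j] /= /andP[ij _]; rewrite Hw_S; apply: div_le.
- by rewrite mulr_ge0.
- exact: Wmax_ge0.
- exact: S_merge_bound.
Qed.

Variable delta : R.
Hypothesis d0 : 0 <= delta.

Definition gc_ok (c : clustering V) (T : R) (blue : {set V}) (Gc : {set V * V}) :=
  forall p, p \in Gc ->
   [/\ Hedge e c p.1 p.2, p.1 \in blue, p.2 \notin blue & T <= Hw e w c p.1 p.2].

Definition merging_ok (c : clustering V) (T : R) (blue : {set V}) (Gc : {set V * V})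
    (pend : seq (V * V)) :=
  exists (c0 : clustering V) (C : V -> V),
  [/\ gc_ok c0 T blue Gc,
      forall x, x \in blue -> c x = c0 x \/ c x = set0,
      forall x, x \notin blue -> c0 x \subset c x,
      uniq pend /\
      forall p, p \in pend -> [/\ p.2 = C p.1, c p.1 = c0 p.1 & p \in Gc] &
      forall s1 p s2, pend = s1 ++ p :: s2 ->
        #|c p.2|%:R + \sum_(q <- s1 | q.2 == p.2) (#|c0 q.1|%:R : R)
          <= (1 + delta) * #|c0 p.2|%:R ].

Lemma merge_good c T blue Gc b r pend :
  merging_ok c T blue Gc ((b, r) :: pend) ->
  Hedge e c b r /\ T / (1 + delta) <= Hw e w c b r.
Proof.
move=> [c0 [C [G Hb Hr [U Hm] Hp]]].
have [_ cb bGc] := Hm (b, r) (mem_head _ _).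
have [/and4P[br ab ar lk] bb rb Tle] := G _ bGc; rewrite /= in br ab ar lk bb rb Tle.
have sub := Hr r rb.
have nb : 0 < (#|c0 b|%:R : R) by rewrite ltr0n card_gt0.
have n0 : 0 < (#|c0 r|%:R : R) by rewrite ltr0n card_gt0.
have nn : 0 < (#|c r|%:R : R).
  by rewrite ltr0n (leq_trans _ (subset_leq_card sub)) // card_gt0.
have hsz := Hp [::] (b, r) pend erefl; rewrite big_nil addr0 /= in hsz.
split.
  apply/and4P; split => //; first by rewrite /alive cb.
    by rewrite /alive -card_gt0 -(ltr0n R) nn.
  by rewrite cb; apply: linked_mono lk.
rewrite Hw_S cb.
set a0 := S (c0 b) (c0 r); set a := S (c0 b) (c r).
have a0a : a0 <= a by apply: S_monoR.
have a00 : 0 <= a0 by apply: S_ge0.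
move: Tle; rewrite Hw_S -/a0 => Tle.
set q := a / (#|c0 b|%:R * #|c r|%:R).
have q0 : 0 <= q by rewrite divr_ge0 ?S_ge0 // mulr_ge0 // ltW.
have aq : a = q * (#|c0 b|%:R * #|c r|%:R).
  by rewrite /q divfK // mulf_neq0 // lt0r_neq0.
rewrite ler_pdivrMr ?ltr_pwDl //; apply: le_trans Tle _.
rewrite ler_pdivrMr ?mulr_gt0 //.
move: a0a; rewrite aq => a0a.
apply: le_trans a0a _.
set x := (#|c0 b|%:R : R) in nb *; set y := (#|c r|%:R : R) in nn hsz *.
set z := (#|c0 r|%:R : R) in n0 hsz *.
have : 0 <= q * x by rewrite mulr_ge0 // ltW.
nra.
Qed.


Lemma merge_ok c T blue Gc b r pend :
  merging_ok c T blue Gc ((b, r) :: pend) ->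
  merging_ok (Defs.merge c b r) T blue Gc pend.
Proof.
move=> [c0 [C [G Hb Hr [U Hm] Hp]]].
have [rC cb bGc] := Hm (b, r) (mem_head _ _).
have [_ bb rb _] := G _ bGc; rewrite /= in bb rb rC cb.
have xr x : x \in blue -> x != r by apply: contraTneq => ->.
have xb x : x \notin blue -> x != b by apply: contraNneq => ->.
move: U; rewrite cons_uniq => /andP[brn U].
exists c0, C; split => //.
- move=> x xb'; rewrite ffunE (negbTE (xr _ xb')).
  by case: eqP => [_|_]; [right | exact: Hb].
- move=> x xr'; rewrite ffunE (negbTE (xb _ xr')).
  case: eqP => [->|_]; last exact: Hr.
  exact: subset_trans (Hr _ rb) (subsetUl _ _).
- split => // p pp.
  have pp' : p \in (b, r) :: pend by rewrite inE pp orbT.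
  have [p2 cp pGc] := Hm p pp'.
  have [_ pb _ _] := G _ pGc.
  split => //; rewrite ffunE (negbTE (xr _ pb)).
  case: eqP => [ep|_] //.
  case/negP: brn; move: pp; rewrite [p]surjective_pairing p2 ep -rC.
  by [].
- move=> s1 p s2 eqp.
  have := Hp ((b, r) :: s1) p s2; rewrite eqp => /(_ erefl).
  rewrite big_cons /=.
  have pp' : p \in (b, r) :: pend by rewrite eqp inE mem_cat inE eqxx !orbT.
  have [_ _ pGc] := Hm p pp'.
  have [_ _ pr _] := G _ pGc.
  apply: le_trans; rewrite ffunE (negbTE (xb _ pr)) eq_sym.
  case: (eqVneq p.2 r) => [pe|pne]; last by rewrite lerD2r.
  rewrite pe addrA lerD2r -cb -natrD ler_nat.
  exact: (leq_card_setU _ _).1.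
Qed.

Lemma end_ok c T blue Gc sz0 :
  merging_ok c T blue Gc [::] -> gc_ok c T blue (cleanGc e w delta c T Gc sz0).
Proof.
move=> [c0 [C [G Hb Hr _ _]]] p; rewrite inE => /andP[pGc /and3P[al Tle _]].
have [/and4P[ne a1 a2 lk] pb pr _] := G _ pGc.
have cp : c p.1 = c0 p.1.
  by case: (Hb _ pb) => // h; move: al; rewrite /alive h eqxx.
split => //; apply/and4P; split => //.
- rewrite /alive -card_gt0; apply: leq_trans (subset_leq_card (Hr _ pr)).
  by rewrite card_gt0.
- by rewrite cp; apply: linked_mono lk => //; exact: Hr.
Qed.


Lemma sel_mem c pi (Gc : {set V * V}) (blue : {set V}) C r b :
  b \in select delta c pi (proposers Gc blue C r) r ->
  [/\ b \in blue, has_red_nbr Gc b & C b = r].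
Proof.
rewrite /select /= => /mem_take; rewrite mem_sort mem_filter mem_enum.
by case/andP => /andP[-> /eqP ->] ->.
Qed.

Lemma sel_uniq c pi (Gc : {set V * V}) (blue : {set V}) C r :
  uniq (selected delta c Gc blue C pi r).
Proof.
rewrite /selected map_inj_uniq; last by move=> x y [].
rewrite /select /=; apply: take_uniq; rewrite sort_uniq filter_uniq //.
exact: enum_uniq.
Qed.

Lemma inner_ok c T blue Gc C pi pend :
  gc_ok c T blue Gc ->
  (forall b, b \in blue -> has_red_nbr Gc b -> (b, C b) \in Gc) ->
  valid_pending delta c Gc blue C pi pend ->
  merging_ok c T blue Gc pend.
Proof.
move=> G HC [_ Hf]; exists c, C.
have memsel p : p \in pend -> p \in selected delta c Gc blue C pi p.2.
  by move=> pp; rewrite -Hf mem_filter eqxx.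
split => //.
- by move=> x _; left.
- split.
    apply: count_mem_uniq => -[b r].
    have -> : count_mem (b, r) pend = count_mem (b, r) [seq p <- pend | p.2 == r].
      rewrite count_filter; apply: eq_count => y /=.
      by case: (eqVneq y (b, r)) => [->|] //=; rewrite eqxx.
    by rewrite Hf count_uniq_mem ?sel_uniq // -Hf mem_filter eqxx.
  move=> p pp; have := memsel p pp; rewrite /selected => /mapP[b bs ep].
  have [bb hb Cb] := sel_mem bs.
  by rewrite ep /= Cb; split => //; rewrite -Cb; apply: HC.
move=> s1 p s2 eqp.
set r := p.2.
have Ef := Hf r; rewrite eqp filter_cat /= eqxx in Ef.
rewrite -big_filter.
set f1 := [seq q <- s1 | q.2 == r] in Ef *.
have hf1 : f1 = take (size f1) (selected delta c Gc blue C pi r).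
  by rewrite -Ef take_size_cat.
have jlt : (size f1 < size (select delta c pi (proposers Gc blue C r) r))%N.
  have := congr1 size Ef; rewrite /selected size_map size_cat /= => <-.
  by rewrite addnS ltnS leq_addr.
rewrite hf1 /selected -map_take big_map /=.
move: jlt; rewrite /select.
set s' := sort _ _.
set k := find _ _.
move=> jlt.
have hsz : (size (take k s') <= k)%N by rewrite size_take_min geq_minl.
have hsz' : (size (take k s') <= size s')%N by rewrite size_take_min geq_minr.
have jk : (size f1 < k)%N := leq_trans jlt hsz.
have js : (size f1 < (size s').+1)%N := leq_trans jlt (leq_trans hsz' (leqnSn _)).
rewrite (take_takel s' (ltnW jk)).
have := before_find 0 jk.
rewrite (nth_iota 0 0 js) add0n /csize => /negbT h.
move: h; rewrite -leNgt => h.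
set X := \sum_(j <- _) _ in h *.
lra.
Qed.



Definition Inv (s : state R V) : Prop :=
  disj s.1 /\
  match s.2 with
  | Idle => True
  | Layer T => Wmax e w s.1 <= (1 + delta) * T
  | Outer T blue Gc _ => Wmax e w s.1 <= (1 + delta) * T /\ gc_ok s.1 T blue Gc
  | Merging T blue Gc _ pend =>
      Wmax e w s.1 <= (1 + delta) * T /\ merging_ok s.1 T blue Gc pend
  end.

Lemma Inv_step s m s' : Inv s -> step e w delta s m s' -> Inv s'.
Proof.
move=> [D H] st; case: st H D => /=.
- move=> c _ _ D; split => //=; rewrite [X in _ <= X]mulrC divfK //.
  by apply: lt0r_neq0; rewrite ltr_pwDl.
- by [].
- move=> c T blue _ _ H D; split => //=; split => // p.
  rewrite inE => /and5P[h1 h2 h3 h4 _]; by split.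
- by move=> c T blue Gc sz0 _ [H _].
- move=> c T blue Gc sz0 C pi pend _ hC _ _ vp [H G] D; split => //=; split => //.
  exact: inner_ok vp.
- move=> c T blue Gc sz0 b r pend [H M] D; split => /=; first exact: disj_merge.
  split; first exact: le_trans (Wmax_merge _ _ D) H.
  exact: merge_ok.
- move=> c T blue Gc sz0 [H M] D; split => //=; split => //.
  exact: end_ok M.
Qed.

Lemma Inv_reach s : reachable e w delta s -> Inv s.
Proof.
elim=> [|s0 m s1 _ IH st]; last exact: Inv_step IH st.
by split => //; exact: disj_init.
Qed.

Lemma step_some s m s' : step e w delta s m s' -> forall b r, m = Some (b, r) ->
  exists c T blue Gc sz0 pend, s = (c, Merging T blue Gc sz0 ((b, r) :: pend)).
Proof.
intros st; destruct st; intros b0 r0 Heq; try discriminate.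
injection Heq; intros; subst; do 6 eexists; reflexivity.
Qed.

End Main.

Theorem mainTheorem4 (R : realFieldType) (eps : R) :
  0 < eps ->
  exists delta : R, 0 < delta /\
    forall (V : finType) (e : rel V) (w : V -> V -> R),
      symmetric e -> irreflexive e ->
      (forall x y, w x y = w y x) ->
      (forall x y, e x y -> 0 < w x y) ->
      approx_merges e w delta eps.
Proof.
move=> eps0; exists (Num.min 1 (eps / 3)).
have dpos : 0 < Num.min 1 (eps / 3) by rewrite lt_min ltr01 divr_gt0.
have d1 : Num.min 1 (eps / 3) <= 1 by rewrite ge_min lexx.
have d3 : Num.min 1 (eps / 3) <= eps / 3 by rewrite ge_min lexx orbT.
split => // V e w esym _ wsym wpos s b r s' rs st.
set d := Num.min 1 (eps / 3) in dpos d1 d3 rs st *.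
have sq : (1 + d) * (1 + d) <= 1 + eps.
  have : 3 * d <= eps by rewrite -ler_pdivlMl //; lra.
  nra.
have [D I] := Inv_reach esym wsym wpos (ltW dpos) rs.
have [c [T [blue [Gc [sz0 [pend es]]]]]] := step_some st erefl.
rewrite es /= in I *; case: I => H M.
have [he hw] := merge_good wpos (ltW dpos) M.
split => //.
apply: le_trans hw.
have W0 := Wmax_ge0 wpos c.
set t := T / (1 + d).
have dp1 : 0 < 1 + d by lra.
have Te : T = t * (1 + d) by rewrite /t divfK // lt0r_neq0.
rewrite Te in H.
have ep1 : 0 < 1 + eps by lra.
rewrite ler_pdivrMr //.
have t0 : 0 <= t.
  have sq0 : 0 < (1 + d) * (1 + d) by rewrite mulr_gt0.
  rewrite -(pmulr_rge0 _ sq0).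
  apply: le_trans W0 _; apply: le_trans H _; rewrite le_eqVlt; apply/orP; left; apply/eqP; ring.
nra.
Qed.
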